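(* Let $\pi$ be a propositional formula that is neither a tautology nor a contradiction. Then $\Box\bot\leftrightarrow[\dagger\pi]\Box\bot$ is valid (true at every world of every model).
   Context: Fix a countable non-empty set $\mathit{At}$ of atoms. Formulas are built from $\top$, atoms, $\lnot$, $\land$, $\Box$ and, for each propositional $\pi$, the operator $[\dagger\pi]$ (''after the agent forgets $\pi$''). A model is $\mathcal{M}=\langle W,R,V\rangle$, $W\neq\varnothing$, $R\subseteq W\times W$ arbitrary, $V:\mathit{At}\to\mathcal{P}(W)$, with standard Kripke semantics for $\Box$. A literal is an atom or its negation; a clause is a finite set $D$ of literals read as $\bigvee D$ ($\bigvee\varnothing:=\bot$), tautological if it contains $p$ and $\lnot p$ for some $p$. For propositional $\pi$, $\mathcal{C}(\pi)$ is the set of non-tautological clauses $D$ with $\models\pi\to\bigvee D$ and no $D'\subsetneq D$ with $\models\pi\to\bigvee D'$. For a model $\mathcal{M}$ and a non-tautological clause $D$, $\mathcal{M}^{(D)}_u=\langle W',R',V'\rangle$ has $W'=W\times\{0,1\}$, $(w,i)R'(v,j)$ iff $wRv$, $(w,0)\in V'(p)$ iff $w\in V(p)$, and $(w,1)\in V'(p)$ iff $\lnot p\in D$, or $\{p,\lnot p\}\cap D=\varnothing$ and $w\in V(p)$. Semantics: $\mathcal{M},w\models[\dagger\pi]\varphi$ iff for all $D\in\mathcal{C}(\pi)$, $\mathcal{M}^{(D)}_u,(w,0)\models\varphi$. *)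

(* Defs.v *)
From mathcomp Require Import all_boot finmap.
Set Implicit Arguments. Unset Strict Implicit. Unset Printing Implicit Defensive.
Local Open Scope fset_scope.

Section Logic.
Variable At : countType.

Inductive pform : Type :=
| PTop : pform
| PAtom : At -> pform
| PNeg : pform -> pform
| PAnd : pform -> pform -> pform.

(* Full language: top, atoms, neg, and, box, and [dagger pi] for propositional pi. *)
Inductive form : Type :=
| FTop : form
| FAtom : At -> form
| FNeg : form -> form
| FAnd : form -> form -> form
| FBox : form -> form
| FForget : pform -> form -> form.

Fixpoint peval (v : At -> bool) (p : pform) : bool :=
  match p with
  | PTop => true
  | PAtom a => v a
  | PNeg q => ~~ peval v q
  | PAnd q r => peval v q && peval v r
  end.

Definition tautology (p : pform) : Prop := forall v, peval v p.
Definition contradiction (p : pform) : Prop := forall v, ~~ peval v p.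

(* Literals: (true, p) is the atom p, (false, p) is its negation ~p. *)
Definition lit := (bool * At)%type.
Definition lit_eval (v : At -> bool) (l : lit) : bool :=
  if l.1 then v l.2 else ~~ v l.2.

Definition clause := {fset lit}.

Definition clause_eval (v : At -> bool) (D : clause) : Prop :=
  exists2 l, l \in D & lit_eval v l.

Definition tautological (D : clause) : Prop :=
  exists p, (true, p) \in D /\ (false, p) \in D.

Definition entails_clause (p : pform) (D : clause) : Prop :=
  forall v, peval v p -> clause_eval v D.

Definition in_C (p : pform) (D : clause) : Prop :=
  ~ tautological D /\ entails_clause p D /\
  ~ (exists D' : clause, D' `<` D /\ entails_clause p D').

Record model : Type := Model {
  W : Type;
  W_inh : inhabited W;
  R : W -> W -> Prop;
  V : At -> W -> Prop
}.

Definition upd (M : model) (D : clause) : model :=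
  {| W := (W M * bool)%type;
     W_inh := match W_inh M with inhabits w => inhabits (w, false) end;
     R := fun x y => @R M x.1 y.1;
     V := fun p x =>
       if x.2 then ((false, p) \in D) \/
                   (~ ((true, p) \in D \/ (false, p) \in D) /\ @V M p x.1)
       else @V M p x.1 |}.

Fixpoint sat (phi : form) : forall M : model, W M -> Prop :=
  match phi with
  | FTop => fun _ _ => True
  | FAtom a => fun M w => @V M a w
  | FNeg psi => fun M w => ~ @sat psi M w
  | FAnd psi chi => fun M w => @sat psi M w /\ @sat chi M w
  | FBox psi => fun M w => forall u, @R M w u -> @sat psi M u
  | FForget p psi => fun M w =>
      forall D : clause, in_C p D -> @sat psi (upd M D) (w, false)
  end.

Definition valid (phi : form) : Prop := forall (M : model) (w : W M), @sat phi M w.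

Definition FBot : form := FNeg FTop.
Definition FIff (a b : form) : form :=
  FAnd (FNeg (FAnd a (FNeg b))) (FNeg (FAnd b (FNeg a))).

End Logic.

(* Main.v *)
Require Import Defs.
From mathcomp Require Import all_boot finmap.
From Stdlib Require Import Classical.
Local Open Scope fset_scope.

Section Aux.
Variable At : countType.

Fixpoint atoms (p : pform At) : seq At :=
  match p with
  | PTop => [::]
  | PAtom a => [:: a]
  | PNeg q => atoms q
  | PAnd q r => atoms q ++ atoms r
  end.

Lemma peval_ext (u v : At -> bool) p :
  (forall a, a \in atoms p -> u a = v a) -> peval u p = peval v p.
Proof.
elim: p => [|a|q IH|q IHq r IHr] /= H //.
- by apply: H; rewrite inE.
- by rewrite IH.
- rewrite IHq ?IHr // => a Ha; apply: H; rewrite mem_cat Ha ?orbT //.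
Qed.

Lemma min_exists (pi : pform At) (D0 : clause At) n : forall D : clause At,
  #|` D| <= n -> D `<=` D0 -> entails_clause pi D ->
  exists D', D' `<=` D0 /\ entails_clause pi D' /\
    ~ (exists D'' : clause At, D'' `<` D' /\ entails_clause pi D'').
Proof.
elim: n => [|n IH] D Hs Hsub He.
  exists D; split => //; split => // [[D'' [Hp _]]].
  by move: (fproper_ltn_card Hp); rewrite ltnNge; move: Hs; rewrite leqn0 => /eqP ->.
case: (classic (exists D'' : clause At, D'' `<` D /\ entails_clause pi D'')).
  move=> [D'' [Hp He']]; apply: (IH D'') => //.
    by have := fproper_ltn_card Hp; move=> H; rewrite -ltnS; apply: leq_trans H Hs.
  by apply: fsubset_trans Hsub; apply: fproper_sub.
by move=> Hn; exists D.
Qed.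

Lemma C_nonempty (pi : pform At) : ~ tautology pi -> exists D, in_C pi D.
Proof.
move=> Ht.
have [v Hv] : exists v, ~~ peval v pi.
  apply: NNPP => Hn; apply: Ht => v; apply: negbNE; apply/negP => Hv.
  by apply: Hn; exists v; rewrite Hv.
set D0 : clause At := seq_fset tt [seq (~~ v a, a) | a <- atoms pi].
have HD0 : entails_clause pi D0.
  move=> u Hu.
  have [a Ha Hne] : exists2 a, a \in atoms pi & u a != v a.
    apply: NNPP => Hn.
    have Heq : peval u pi = peval v pi.
      apply: peval_ext => a Ha.
      apply: NNPP => Hne; apply: Hn; exists a => //; exact/eqP.
    by move: Hv; rewrite -Heq Hu.
  exists (~~ v a, a); first by rewrite seq_fsetE; apply/mapP; exists a.
  by rewrite /lit_eval /=; case: (v a) Hne; case: (u a).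
have [D [Hsub [He Hm]]] := @min_exists pi D0 #|` D0| D0 (leqnn _) (fsubset_refl _) HD0.
exists D; split => //.
move=> [p [Hp1 Hp2]].
move: (fsubsetP Hsub _ Hp1) (fsubsetP Hsub _ Hp2); rewrite !seq_fsetE.
move=> /mapP [a _ [Ea1 Ea2]] /mapP [b _ [Eb1 Eb2]].
subst; move: Ea1 Eb1; case: (v b) => //=.
Qed.
End Aux.

Theorem proposition3 (At : countType) (a0 : At) (pi : pform At) :
  ~ tautology pi -> ~ contradiction pi ->
  valid (FIff (FBox (FBot At)) (FForget pi (FBox (FBot At)))).
Proof.
move=> Ht _ M w /=; split.
  move=> [A B]; apply: B => D _ u Hu; exact: (A u.1 Hu).
move=> [B A]; apply: A => u Hu.
have [D HD] := @C_nonempty At pi Ht.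
exact: (B D HD (u, false) Hu).
Qed.
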